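(* Let $\kappa$ be a regular infinite cardinal and $\mu$ a singular cardinal with $\mathrm{cf}(\mu)=\kappa$. Then $w({}^{\kappa}\mu,\mathrm{bd})=\mu^{<\kappa}$, $w({}^{\mu}2,\mathrm{bd})=w({}^{\mu}\kappa,\mathrm{bd})=2^{<\mu}$, and $w({}^{\mu}\mu,\mathrm{bd})=\mu^{<\mu}$. Furthermore, for each $X\in\{{}^{\kappa}\mu,{}^{\mu}2,{}^{\mu}\kappa,{}^{\mu}\mu\}$, the space $(X,\mathrm{bd})$ has an open partition of cardinality $w(X,\mathrm{bd})$.
   Context: For ordinals $\delta,\rho$, ${}^{\delta}\rho$ is the set of functions $\delta\to\rho$; for a partial function $s\colon\delta\rightharpoonup\rho$, $[s]=\{f\in{}^{\delta}\rho: s\subseteq f\}$. The bounded topology on ${}^{\delta}\rho$ has base $\{[s]: s\in{}^{\alpha}\rho,\ \alpha<\delta\}$; $(X,\mathrm{bd})$ denotes $X$ with this topology. $w(X,\tau)$ is the weight (least size of a base). An open partition of a space is a family of pairwise disjoint nonempty open sets whose union is the whole space. *)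

(* Defs.v *)
From HB Require Import structures.
From mathcomp Require Import all_boot all_order all_algebra.
From mathcomp Require Import all_classical.
Set Implicit Arguments. Unset Strict Implicit. Unset Printing Implicit Defensive.
Local Open Scope classical_set_scope.
Local Open Scope card_scope.

(* Ordinals are represented by well-ordered types (D, lt). *)
Definition well_order {T : Type} (lt : T -> T -> Prop) :=
  [/\ (forall x, ~ lt x x), (forall x y z, lt x y -> lt y z -> lt x z),
      (forall x y, [\/ lt x y, x = y | lt y x]) & well_founded lt].

Definition card_lt {T U : Type} (A : set T) (B : set U) := A #<= B /\ ~ (B #<= A).

(* (T, lt) is an initial ordinal, i.e. a cardinal: every proper initial segment
   has strictly smaller cardinality *)
Definition initial_ordinal {T : Type} (lt : T -> T -> Prop) :=
  well_order lt /\ forall a : T, card_lt [set b | lt b a] [set: T].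

Definition infinite_cardinal {T : Type} (lt : T -> T -> Prop) :=
  initial_ordinal lt /\ infinite_set [set: T].

Definition cofinal {T : Type} (lt : T -> T -> Prop) (C : set T) :=
  forall a, exists b, C b /\ ~ lt b a.

Definition regular {T : Type} (lt : T -> T -> Prop) :=
  forall C, cofinal lt C -> [set: T] #<= C.

Definition singular {T : Type} (lt : T -> T -> Prop) :=
  exists C, cofinal lt C /\ card_lt C [set: T].

(* cf(T, lt) = |K| : least cardinality of a cofinal subset *)
Definition cf_is {T : Type} (lt : T -> T -> Prop) (K : Type) :=
  (exists C, cofinal lt C /\ C #= [set: K]) /\
  (forall C, cofinal lt C -> [set: K] #<= C).

(* type whose cardinality is rho^{<delta} = | U_{alpha<delta} ^alpha rho | *)
Definition lt_pow {D : Type} (lt : D -> D -> Prop) (R : Type) :=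
  {a : D & {b : D | lt b a} -> R}.

Definition bd_basic {D R : Type} (lt : D -> D -> Prop) (a : D)
    (s : {b : D | lt b a} -> R) : set (D -> R) :=
  [set g | forall b (h : lt b a), g b = s (exist _ b h)].

Definition bd_open {D R : Type} (lt : D -> D -> Prop) (O : set (D -> R)) :=
  forall f, O f -> exists (a : D) (s : {b : D | lt b a} -> R),
    @bd_basic D R lt a s f /\ @bd_basic D R lt a s `<=` O.

Definition is_base {X : Type} (op : set X -> Prop) (B : set (set X)) :=
  (forall b, B b -> op b) /\
  (forall O x, op O -> O x -> exists b, [/\ B b, b x & b `<=` O]).

(* w(X, op) = |L| *)
Definition weight_is {X U : Type} (op : set X -> Prop) (L : set U) :=
  (exists B, is_base op B /\ B #= L) /\ (forall B, is_base op B -> L #<= B).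

Definition open_partition {X : Type} (op : set X -> Prop) (P : set (set X)) :=
  [/\ (forall U, P U -> op U /\ U !=set0),
      (forall U V, P U -> P V -> U <> V -> U `&` V = set0)
    & (forall x, exists U, P U /\ U x)].

(* Main.v *)
Require Import Defs.
From HB Require Import structures.
From mathcomp Require Import all_boot all_order all_algebra.
From mathcomp Require Import all_classical.
From Stdlib Require Import ClassicalEpsilon ProofIrrelevance Eqdep.
Set Implicit Arguments. Unset Strict Implicit. Unset Printing Implicit Defensive.
Local Open Scope classical_set_scope.
Local Open Scope card_scope.

Lemma le_fun {T U} (A : set T) (B : set U) (f : T -> U) :
  (forall x, A x -> B (f x)) ->
  (forall x y, A x -> A y -> f x = f y -> x = y) -> A #<= B.
Proof.
move=> fAB finj.
have [g] : $|{injfun A >-> B}|.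
  apply/injfunPex; exists f; first by move=> x; apply: fAB.
  by move=> x y; rewrite !inE; apply: finj.
exact: inj_card_le g.
Qed.

Lemma fun_le {T U} (A : set T) (B : set U) : A #<= B -> A !=set0 ->
  exists f : T -> U, (forall x, A x -> B (f x)) /\
    (forall x y, A x -> A y -> f x = f y -> x = y).
Proof.
move=> AB [x0 Ax0].
elim/Ppointed: U => U in B AB *.
  rewrite card_le_emptyr in AB; move/eqP: AB => AB.
  by rewrite AB in Ax0.
move/pcard_leP: AB => [g].
have /injfunPex [f ff fi] : $|{injfun A >-> B}| by squash g.
exists f; split; first by move=> x Ax; apply: ff.
by move=> x y Ax Ay; apply: fi; rewrite inE.
Qed.

Definition seg {T} (lt : T -> T -> Prop) (c : T) : set T := [set x | lt x c].

Lemma wo_irr T (lt : T -> T -> Prop) : well_order lt -> forall x, ~ lt x x.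
Proof. by case. Qed.
Lemma wo_trans T (lt : T -> T -> Prop) : well_order lt -> forall x y z, lt x y -> lt y z -> lt x z.
Proof. by case. Qed.
Lemma wo_tri T (lt : T -> T -> Prop) : well_order lt -> forall x y, [\/ lt x y, x = y | lt y x].
Proof. by case. Qed.
Lemma wo_wf T (lt : T -> T -> Prop) : well_order lt -> well_founded lt.
Proof. by case. Qed.

Lemma wo_asym T (lt : T -> T -> Prop) : well_order lt -> forall x y, lt x y -> ~ lt y x.
Proof. by move=> wo x y xy yx; exact: (wo_irr wo (wo_trans wo xy yx)). Qed.

Lemma wo_nlt T (lt : T -> T -> Prop) : well_order lt -> forall x y, ~ lt x y -> x = y \/ lt y x.
Proof. by move=> wo x y nxy; case: (wo_tri wo x y) => h; [|left|right]. Qed.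

Lemma wo_le_lt T (lt : T -> T -> Prop) : well_order lt -> forall x y z, ~ lt y x -> lt y z -> lt x z.
Proof.
move=> wo x y z /(wo_nlt wo) [->//|xy yz]; exact: (wo_trans wo xy yz).
Qed.

Lemma wo_lt_le T (lt : T -> T -> Prop) : well_order lt -> forall x y z, lt x y -> ~ lt z y -> lt x z.
Proof.
move=> wo x y z xy /(wo_nlt wo) [e|yz]; [by rewrite e | exact: (wo_trans wo xy yz)].
Qed.

Lemma wo_min T (lt : T -> T -> Prop) : well_order lt -> forall (S : set T), S !=set0 ->
  exists m, S m /\ forall y, S y -> ~ lt y m.
Proof.
move=> wo S [x Sx]; apply: contrapT => nmin.
suff : forall y, ~ S y by move/(_ x).
move=> y; elim: (wo_wf wo y) => z _ IH Sz; apply: nmin; exists z; split=> // w Sw wz.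
exact: (IH w wz Sw).
Qed.

Definition wmin {T} (lt : T -> T -> Prop) (d : T) (S : set T) : T :=
  epsilon (inhabits d) (fun m => S m /\ forall y, S y -> ~ lt y m).

Lemma wminP T (lt : T -> T -> Prop) d S : well_order lt -> S !=set0 ->
  S (wmin lt d S) /\ forall y, S y -> ~ lt y (wmin lt d S).
Proof. by move=> wo S0; exact: (epsilon_spec (inhabits d) _ (wo_min wo S0)). Qed.

Definition wsucc {T} (lt : T -> T -> Prop) (a : T) : T := wmin lt a [set b | lt a b].

Lemma wsuccP T (lt : T -> T -> Prop) : well_order lt -> (forall a, exists b, lt a b) ->
  forall a, lt a (wsucc lt a) /\ forall b, lt a b -> ~ lt b (wsucc lt a).
Proof. by move=> wo nm a; apply: wminP => //; case: (nm a) => b ab; exists b. Qed.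

Lemma wsucc_inj T (lt : T -> T -> Prop) : well_order lt -> (forall a, exists b, lt a b) ->
  forall a b, wsucc lt a = wsucc lt b -> a = b.
Proof.
move=> wo nm a b e; have [ha1 ha2] := wsuccP wo nm a; have [hb1 hb2] := wsuccP wo nm b.
case: (wo_tri wo a b) => [ab||ba] //.
- by exfalso; apply: (ha2 _ ab); rewrite e.
- by exfalso; apply: (hb2 _ ba); rewrite -e.
Qed.

Lemma enum_ex W V (ltW : W -> W -> Prop) (ltV : V -> V -> Prop) (A : set W) (S : set V) (v0 : V) :
  well_order ltW -> well_order ltV ->
  (forall w, A w -> forall g : W -> V, ~ (S `<=` g @` (A `&` seg ltW w))) ->
  exists G : W -> V, [/\ (forall w, A w -> S (G w)),
    (forall w1 w2, A w1 -> A w2 -> ltW w1 w2 -> ltV (G w1) (G w2)) &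
    (forall w y, A w -> S y -> ltV y (G w) -> exists w', [/\ A w', ltW w' w & G w' = y])].
Proof.
move=> woW woV hyp.
pose body (w : W) (g : W -> V) : V := wmin ltV v0 (S `\` g @` (A `&` seg ltW w)).
pose F (w : W) (rec : forall w', ltW w' w -> V) : V :=
  body w (fun w' => match pselect (ltW w' w) with left h => rec w' h | right _ => v0 end).
pose G := Fix (wo_wf woW) (fun _ => V) F.
have img_eq : forall w (g1 g2 : W -> V), (forall w', ltW w' w -> g1 w' = g2 w') ->
    g1 @` (A `&` seg ltW w) = g2 @` (A `&` seg ltW w).
  move=> w g1 g2 e; apply/seteqP; split=> y [x [Ax xw] <-]; exists x => //.
    by rewrite e.
  by rewrite e.
have GE : forall w, G w = body w G.
  move=> w; rewrite /G Fix_eq; last first.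
    move=> x f g e; rewrite /F /body; congr (wmin _ _ (_ `\` _)); apply: img_eq => w' hw'.
    by case: pselect => // h; rewrite e.
  rewrite /F /body; congr (wmin _ _ (_ `\` _)); apply: img_eq => w' hw'.
  by case: pselect.
have GP : forall w, A w -> (S (G w) /\ ~ (G @` (A `&` seg ltW w)) (G w)) /\
    forall y, S y -> ~ (G @` (A `&` seg ltW w)) y -> ~ ltV y (G w).
  move=> w Aw; rewrite GE.
  have ne : (S `\` G @` (A `&` seg ltW w)) !=set0.
    apply: contrapT => h; apply: (hyp w Aw G) => y Sy.
    by apply: contrapT => ny; apply: h; exists y; split.
  have [h1 h2] := @wminP V ltV v0 (S `\` G @` (A `&` seg ltW w)) woV ne.
  split; first exact: h1.
  by move=> y Sy ny; apply: h2; split.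
have mono : forall w1 w2, A w1 -> A w2 -> ltW w1 w2 -> ltV (G w1) (G w2).
  move=> w1 w2 A1 A2 w12.
  have [[S1 n1] m1] := GP w1 A1; have [[S2 n2] m2] := GP w2 A2.
  case: (wo_tri woV (G w1) (G w2)) => [//|e|lt21].
  - by exfalso; apply: n2; exists w1 => //; split.
  - exfalso; apply: (m1 (G w2) S2) => // -[x [Ax xw1] ex]; apply: n2.
    by exists x => //; split => //; apply: (wo_trans woW xw1 w12).
exists G; split.
- by move=> w Aw; case: (GP w Aw) => -[].
- exact: mono.
- move=> w y Aw Sy yw; have [_ m] := GP w Aw.
  have : (G @` (A `&` seg ltW w)) y by apply: contrapT => ny; exact: (m y Sy ny yw).
  by move=> [x [Ax xw] <-]; exists x.
Qed.

Definition basicP {D R} (lt : D -> D -> Prop) (p : lt_pow lt R) : set (D -> R) :=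
  @bd_basic D R lt (projT1 p) (projT2 p).

Lemma basic_open D R (lt : D -> D -> Prop) (p : lt_pow lt R) : bd_open lt (basicP p).
Proof. by move=> f bf; exists (projT1 p), (projT2 p); split. Qed.

Lemma basic_base D R (lt : D -> D -> Prop) :
  is_base (@bd_open D R lt) (basicP (lt:=lt) @` [set: lt_pow lt R]).
Proof.
split; first by move=> b [p _ <-]; apply: basic_open.
move=> O x oO Ox; have [a [s [h1 h2]]] := oO x Ox.
by exists (basicP (existT _ a s)); split => //; exists (existT _ a s).
Qed.

Lemma part_le_base X (op : set X -> Prop) P B :
  open_partition op P -> is_base op B -> P #<= B.
Proof.
move=> [Pop Pdis Pcov] [Bop Bb].
pose f (U : set X) := epsilon (inhabits set0) (fun b => B b /\ b `<=` U /\ b !=set0).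
have fP : forall U, P U -> B (f U) /\ f U `<=` U /\ f U !=set0.
  move=> U PU; apply: (epsilon_spec (inhabits set0) (fun b => B b /\ b `<=` U /\ b !=set0)).
  have [oU [x Ux]] := Pop U PU; have [b [Bb1 bx bU]] := Bb U x oU Ux.
  by exists b; split => //; split => //; exists x.
apply: (le_fun (f := f)); first by move=> U PU; case: (fP U PU).
move=> U V PU PV e; apply: contrapT => nUV.
have [_ [fU [x fx]]] := fP U PU; have [_ [fV _]] := fP V PV.
have : (U `&` V) x by split; [apply: fU | apply: fV; rewrite -e].
by rewrite (Pdis U V PU PV nUV).
Qed.

Definition stopping {D R} (lt : D -> D -> Prop) (beta : (D -> R) -> D) :=
  forall f g, (forall x, lt x (beta f) -> g x = f x) -> beta g = beta f.

Definition piece {D R} (lt : D -> D -> Prop) (beta : (D -> R) -> D) (f : D -> R) : set (D -> R) :=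
  [set g | forall x, lt x (beta f) -> g x = f x].

Lemma piece_eq D R (lt : D -> D -> Prop) beta f g : @stopping D R lt beta ->
  piece lt beta f g -> piece lt beta g = piece lt beta f.
Proof.
move=> st pg; have e := st f g pg.
apply/seteqP; split=> h; rewrite /piece /= e => hh x xl.
  by rewrite hh // pg.
by rewrite hh // pg.
Qed.

Lemma stop_partition D R (lt : D -> D -> Prop) beta : @stopping D R lt beta ->
  open_partition (bd_open lt) [set U | exists f, U = piece lt beta f].
Proof.
move=> st; split.
- move=> U [f ->]; split; last by exists f.
  move=> g pg; exists (beta f), (fun p => f (sval p)); split.
    by move=> b h; rewrite pg.
  by move=> h bh x xl; exact: (bh x xl).
- move=> U V [f ->] [g ->] nUV; apply/seteqP; split => // h [hf hg].
  by apply: nUV; rewrite -(piece_eq st hf) (piece_eq st hg).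
- by move=> f; exists (piece lt beta f); split; [exists f|].
Qed.

Lemma stop_le D R (lt : D -> D -> Prop) beta :
  [set U | exists f, U = @piece D R lt beta f] #<= [set: lt_pow lt R].
Proof.
apply: (card_le_trans _ (card_image_le (@basicP D R lt) [set: lt_pow lt R])).
apply: subset_card_le => U [f ->].
by exists (existT _ (beta f) (fun p => f (sval p))).
Qed.

Lemma stop_ge D R (lt : D -> D -> Prop) beta (Phi : lt_pow lt R -> D -> R) :
  @stopping D R lt beta ->
  (forall p p', (forall x, lt x (beta (Phi p)) -> Phi p' x = Phi p x) -> p = p') ->
  [set: lt_pow lt R] #<= [set U | exists f, U = piece lt beta f].
Proof.
move=> st hP; apply: (le_fun (f := fun p => piece lt beta (Phi p))).
  by move=> p _; exists (Phi p).
move=> p p' _ _ e; apply: hP.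
have : piece lt beta (Phi p') (Phi p') by [].
by rewrite -e.
Qed.

Lemma weight_from D R U (lt : D -> D -> Prop) (L : set U) P :
  open_partition (@bd_open D R lt) P -> P #= L -> [set: lt_pow lt R] #<= L ->
  weight_is (@bd_open D R lt) L.
Proof.
move=> oP PL TL.
have LP : L #<= P by move/card_esym: PL; rewrite card_eq_le => /andP[].
split.
  exists (basicP (lt:=lt) @` [set: lt_pow lt R]); split; first exact: basic_base.
  apply: Cantor_Bernstein.
    exact: card_le_trans (card_image_le _ _) TL.
  exact: card_le_trans LP (part_le_base oP (basic_base _ _)).
by move=> B bB; exact: card_le_trans LP (part_le_base oP bB).
Qed.

Lemma stop_eq D R (lt : D -> D -> Prop) beta (Phi : lt_pow lt R -> D -> R) :
  @stopping D R lt beta ->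
  (forall p p', (forall x, lt x (beta (Phi p)) -> Phi p' x = Phi p x) -> p = p') ->
  [set U | exists f, U = piece lt beta f] #= [set: lt_pow lt R].
Proof.
move=> st hP; apply: Cantor_Bernstein; first exact: stop_le.
exact: stop_ge st hP.
Qed.

Lemma succ_mono T (lt : T -> T -> Prop) : well_order lt -> (forall a, exists b, lt a b) ->
  forall a b, lt a b -> lt (wsucc lt a) (wsucc lt b).
Proof.
move=> wo nm a b ab; have [_ h] := wsuccP wo nm a; have [h2 _] := wsuccP wo nm b.
exact: (wo_le_lt wo (h b ab) h2).
Qed.

Lemma min_lt_succ T (lt : T -> T -> Prop) (z0 : T) : well_order lt -> (forall a, exists b, lt a b) ->
  (forall y, ~ lt y z0) -> forall a, lt z0 (wsucc lt a).
Proof.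
move=> wo nm hz a; have [h _] := wsuccP wo nm a.
exact: (wo_le_lt wo (hz a) h).
Qed.

Lemma case_small K M (ltK : K -> K -> Prop) (e : K -> M) (k0 : K) (m0 : M) :
  well_order ltK -> (forall a, exists b, ltK a b) ->
  (forall x y, e x = e y -> x = y) ->
  exists P, open_partition (@bd_open K M ltK) P /\ P #= [set: lt_pow ltK M].
Proof.
move=> wo nm einj.
pose z0 := wmin ltK k0 setT.
have hz : forall y, ~ ltK y z0.
  by move=> y; have [_ h] := @wminP K ltK k0 setT wo (ltac:(by exists k0)); apply: h.
pose eps (x : M) := epsilon (inhabits k0) (fun k => e k = x).
have epsK : forall k, eps (e k) = k.
  move=> k; apply: einj; exact: (epsilon_spec (inhabits k0) (fun k' => e k' = e k) (ex_intro _ k erefl)).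
pose sc := wsucc ltK.
pose pr (y : K) := epsilon (inhabits k0) (fun x => sc x = y).
have prK : forall x, pr (sc x) = x.
  move=> x; apply: (wsucc_inj wo nm).
  exact: (epsilon_spec (inhabits k0) (fun x' => sc x' = sc x) (ex_intro _ x erefl)).
pose beta (f : K -> M) := sc (eps (f z0)).
have st : stopping ltK beta.
  move=> f g hg; rewrite /beta hg //; exact: min_lt_succ.
pose Phi (p : lt_pow ltK M) (y : K) : M :=
  if pselect (y = z0) then e (sc (projT1 p)) else
  match pselect (ltK (pr y) (projT1 p)) with
  | left h => projT2 p (exist _ (pr y) h) | right _ => m0 end.
exists [set U | exists f, U = piece ltK beta f]; split; first exact: stop_partition.
apply: (stop_eq st (Phi := Phi)) => -[a s] [a' s'] /= hyp.
have bP : beta (Phi (existT _ a s)) = sc (sc a).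
  rewrite /beta /Phi /=; destruct (pselect (z0 = z0)) as [h0|n]; [by rewrite epsK|by case: n].
rewrite bP in hyp.
have z0lt : ltK z0 (sc (sc a)) by exact: min_lt_succ.
have := hyp z0 z0lt; rewrite /Phi /=; destruct (pselect (z0 = z0)) as [h0|n]; last by case: n.
move=> /einj /(wsucc_inj wo nm) ea.
subst a'; congr existT; apply: boolp.funext => -[b hb].
have bl : ltK (sc b) (sc (sc a)).
  apply: (wo_trans wo (succ_mono wo nm hb)); exact: (wsuccP wo nm _).1.
have := hyp (sc b) bl; rewrite /Phi /=; destruct (pselect (sc b = z0)) as [e0|n0].
  by exfalso; have h1 : ltK z0 (sc b) := min_lt_succ wo nm hz b; rewrite e0 in h1; exact: (wo_irr wo h1).
rewrite !prK; destruct (pselect (ltK b a)) as [h|nh]; last by [].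
by rewrite (proof_irrelevance _ h hb).
Qed.

Definition wmax {T} (lt : T -> T -> Prop) (a b : T) : T := if `[< lt a b >] then b else a.

Lemma wmax_l T (lt : T -> T -> Prop) a b : well_order lt -> ~ lt (wmax lt a b) a.
Proof.
move=> wo; rewrite /wmax; case: asboolP => h; last exact: (wo_irr wo).
exact: (wo_asym wo h).
Qed.

Lemma wmax_r T (lt : T -> T -> Prop) a b : well_order lt -> ~ lt (wmax lt a b) b.
Proof.
move=> wo; rewrite /wmax; case: asboolP => h; first exact: (wo_irr wo).
by move=> ba; case: (wo_tri wo a b) => [//|e|//]; rewrite e in ba; exact: (wo_irr wo ba).
Qed.

Lemma wmax_lt T (lt : T -> T -> Prop) a b c : lt a c -> lt b c -> lt (wmax lt a b) c.
Proof. by rewrite /wmax; case: asboolP. Qed.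

Definition sq {T} (lt : T -> T -> Prop) (c : T) : set (T * T) := [set p | lt p.1 c /\ lt p.2 c].

Definition godel {T} (lt : T -> T -> Prop) (p q : T * T) : Prop :=
  lt (wmax lt p.1 p.2) (wmax lt q.1 q.2) \/
  (wmax lt p.1 p.2 = wmax lt q.1 q.2 /\ (lt p.1 q.1 \/ (p.1 = q.1 /\ lt p.2 q.2))).

Lemma godel_wo T (lt : T -> T -> Prop) : well_order lt -> well_order (godel lt).
Proof.
move=> wo; split.
- move=> [a b]; rewrite /godel /= => -[h|[_ [h|[_ h]]]]; exact: (wo_irr wo h).
- move=> [a b] [c d] [e f]; rewrite /godel /=.
  set m1 := wmax lt a b; set m2 := wmax lt c d; set m3 := wmax lt e f.
  move=> [h1|[e1 h1]] [h2|[e2 h2]].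
  + by left; exact: (wo_trans wo h1 h2).
  + by left; rewrite -e2.
  + by left; rewrite e1.
  + right; split; first by rewrite e1.
    case: h1 => [h1|[e3 h1]]; case: h2 => [h2|[e4 h2]].
    * by left; exact: (wo_trans wo h1 h2).
    * by left; rewrite -e4.
    * by left; rewrite e3.
    * by right; split; [rewrite e3|exact: (wo_trans wo h1 h2)].
- move=> [a b] [c d]; rewrite /godel /=.
  case: (wo_tri wo (wmax lt a b) (wmax lt c d)) => [h|e|h].
  + by apply: Or31; left.
  + case: (wo_tri wo a c) => [h|e2|h].
    * by apply: Or31; right; split => //; left.
    * case: (wo_tri wo b d) => [h|e3|h].
      -- by apply: Or31; right; split => //; right.
      -- by apply: Or32; rewrite e2 e3.
      -- by apply: Or33; right; split => //; right.
    * by apply: Or33; right; split => //; left.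
  + by apply: Or33; left.
- have wf := wo_wf wo.
  suff : forall n a b, wmax lt a b = n -> Acc (godel lt) (a, b).
    by move=> H [a b]; exact: (H _ a b erefl).
  move=> n; elim: (wf n) => {}n _ IHn a; elim: (wf a) => {}a _ IHa b.
  elim: (wf b) => {}b _ IHb eab; constructor => -[c d]; rewrite /godel /= eab.
  move=> [h|[e [h|[e2 h]]]].
  + exact: (IHn _ h c d erefl).
  + exact: (IHa c h d e).
  + rewrite e2; apply: IHb => //; rewrite -e2 //.
Qed.

Lemma godel_box T (lt : T -> T -> Prop) p q : well_order lt -> godel lt q p ->
  ~ lt (wmax lt p.1 p.2) q.1 /\ ~ lt (wmax lt p.1 p.2) q.2.
Proof.
move=> wo h.
have hm : ~ lt (wmax lt p.1 p.2) (wmax lt q.1 q.2).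
  case: h => [h|[e _]]; [exact: (wo_asym wo h)|rewrite e; exact: (wo_irr wo)].
split=> hh.
- by apply: hm; apply: (wo_lt_le wo hh); exact: wmax_l.
- by apply: hm; apply: (wo_lt_le wo hh); exact: wmax_r.
Qed.

Lemma two_elems T (A : set T) : infinite_set A -> exists a0 a1, [/\ A a0, A a1 & a0 <> a1].
Proof.
move=> inf; have [a0 A0] := infinite_setN0 inf.
have inf2 : infinite_set (A `\` [set a0]).
  move=> fin; apply: inf; apply: (sub_finite_set (B := (A `\` [set a0]) `|` [set a0])).
    by move=> x Ax; case: (pselect (x = a0)) => [->|n]; [right|left].
  by rewrite finite_setU; split => //; exact: finite_set1.
have [a1 [A1 n1]] := infinite_setN0 inf2.
by exists a0, a1; split => // e; apply: n1; rewrite e.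
Qed.

Lemma le_sq T U (A : set T) (B : set U) (f : T -> U) :
  (forall x, A x -> B (f x)) -> (forall x y, A x -> A y -> f x = f y -> x = y) ->
  [set p | A p.1 /\ A p.2] #<= [set p | B p.1 /\ B p.2].
Proof.
move=> fAB finj; apply: (le_fun (f := fun p => (f p.1, f p.2))).
  by move=> p [h1 h2]; split; apply: fAB.
move=> [x1 x2] [y1 y2] [h1 h2] [h3 h4] /= [e1 e2].
by rewrite (finj x1 y1 h1 h3 e1) (finj x2 y2 h2 h4 e2).
Qed.

Lemma hess T (lt : T -> T -> Prop) : well_order lt ->
  forall c, infinite_set (seg lt c) -> sq lt c #<= seg lt c.
Proof.
move=> wo c; elim: (wo_wf wo c) => {}c _ IH inf.
case: (pselect (exists m, lt m c /\ seg lt c #<= seg lt m)) => [[m [mc le]]|nB].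
  have infm : infinite_set (seg lt m) by move=> fin; apply: inf; exact: (card_le_finite le fin).
  have IHm := IH m mc infm.
  have [f [fS finj]] := fun_le le (infinite_setN0 inf).
  apply: (card_le_trans (le_sq fS finj)).
  apply: (card_le_trans IHm); apply: subset_card_le => x xm; exact: (wo_trans wo xm mc).
have hyp : forall w, sq lt c w -> forall g : T * T -> T,
    ~ (seg lt c `<=` g @` (sq lt c `&` seg (godel lt) w)).
  move=> [w1 w2] [w1c w2c] g sub; set mx := wmax lt w1 w2.
  have mxc : lt mx c by exact: wmax_lt.
  have le1 : seg lt c #<= [set q | ~ lt mx q.1 /\ ~ lt mx q.2].
    apply: (card_le_trans (subset_card_le sub)); apply: (card_le_trans (card_image_le _ _)).
    by apply: subset_card_le => q [_ gq]; exact: (godel_box wo gq).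
  case: (pselect (finite_set (seg lt mx))) => [fin|infm].
    apply: inf; apply: (card_le_finite le1).
    apply: (sub_finite_set (B := (seg lt mx `|` [set mx]) `*` (seg lt mx `|` [set mx]))).
      move=> [q1 q2] [h1 h2]; split => /=.
        by case: (wo_nlt wo h1) => [->|h]; [right|left].
      by case: (wo_nlt wo h2) => [->|h]; [right|left].
    by apply: finite_setX; rewrite finite_setU; split => //; exact: finite_set1.
  have IHm := IH mx mxc infm.
  have [a0 [a1 [A0 A1 n01]]] := two_elems infm.
  have leX : [set z | ~ lt mx z] #<= seg lt mx.
    apply: (card_le_trans _ IHm).
    apply: (le_fun (f := fun z => if `[< z = mx >] then (a0, a1) else (z, a0))).
      move=> z hz; case: asboolP => [_|n]; first by split.
      by split => //=; case: (wo_nlt wo hz) => // e; exfalso; apply: n.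
    move=> x y hx hy; case: asboolP => [ex|nx]; case: asboolP => [ey|ny].
    - by rewrite ex ey.
    - by move=> [e1 e2]; exfalso; apply: n01.
    - by move=> [e1 e2]; exfalso; apply: n01.
    - by case.
  have [j [jS jinj]] := fun_le leX (ltac:(by exists mx; exact: (wo_irr wo))).
  apply: (nB); exists mx; split => //.
  apply: (card_le_trans le1); apply: (card_le_trans _ IHm).
  exact: (le_sq jS jinj).
have [G [GS Gm _]] := enum_ex c (godel_wo wo) wo hyp.
apply: (le_fun (f := G)); first exact: GS.
move=> x y hx hy e; case: (wo_tri (godel_wo wo) x y) => [h|//|h].
- by have := Gm _ _ hx hy h; rewrite e => /(wo_irr wo).
- by have := Gm _ _ hy hx h; rewrite e => /(wo_irr wo).
Qed.

Lemma surj_le T U (S : set U) (g : T -> U) (X : set T) : S `<=` g @` X -> S #<= X.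
Proof. by move=> sub; apply: (card_le_trans (subset_card_le sub)); exact: card_image_le. Qed.

Lemma code_space K M (ltK : K -> K -> Prop) (ltM : M -> M -> Prop) (m0 : M) :
  well_order ltK -> well_order ltM -> card_lt [set: K] [set: M] ->
  exists c0 (iota : K -> M), (forall k, ltM (iota k) c0) /\ (forall x y, iota x = iota y -> x = y).
Proof.
move=> woK woM [KM nMK].
have hyp : forall w, [set: K] w -> forall g : K -> M, ~ ([set: M] `<=` g @` ([set: K] `&` seg ltK w)).
  move=> w _ g sub; apply: nMK; apply: (card_le_trans (surj_le sub)); exact: card_leT.
have [G [_ Gm Gd]] := enum_ex m0 woK woM hyp.
have [c0 nc0] : exists c0, ~ (G @` [set: K]) c0.
  apply: contrapT => h; apply: nMK; apply: (surj_le (g := G)) => y _.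
  by apply: contrapT => ny; apply: h; exists y.
exists c0, G; split.
  move=> k; case: (wo_tri woM (G k) c0) => [//|e|h]; first by exfalso; apply: nc0; exists k.
  by have [w' [_ _ e]] := Gd k c0 I I h; exfalso; apply: nc0; exists w'.
move=> x y e; case: (wo_tri woK x y) => [h|//|h].
- by have := Gm x y I I h; rewrite e => /(wo_irr woM).
- by have := Gm y x I I h; rewrite e => /(wo_irr woM).
Qed.

Lemma shift_ex M (ltM : M -> M -> Prop) (c0 : M) :
  well_order ltM -> infinite_set (seg ltM c0) ->
  (forall m, ~ ([set: M] #<= seg ltM m)) ->
  exists G : M -> M, [/\ (forall y, ~ ltM (G y) c0),
    (forall x y, ltM x y -> ltM (G x) (G y)) & (forall y, ~ ltM (G y) y)].
Proof.
move=> wo inf small.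
have hyp : forall w, [set: M] w -> forall g : M -> M,
    ~ ([set y | ~ ltM y c0] `<=` g @` ([set: M] `&` seg ltM w)).
  move=> w _ g sub; set m := wmax ltM c0 w.
  have c0m : ~ ltM m c0 by exact: wmax_l.
  have wm : ~ ltM m w by exact: wmax_r.
  have infm : infinite_set (seg ltM m).
    move=> fin; apply: inf; apply: (sub_finite_set _ fin) => x xc0; exact: (wo_lt_le wo xc0 c0m).
  have [a0 [a1 [A0 A1 n01]]] := two_elems inf.
  pose pick y := epsilon (inhabits c0) (fun z => ltM z w /\ g z = y).
  apply: (small m); apply: (card_le_trans _ (hess wo infm)).
  apply: (le_fun (f := fun y => if `[< ltM y c0 >] then (y, a0) else (pick y, a1))).
    move=> y _; case: asboolP => h; split => /=.
    - exact: (wo_lt_le wo h c0m).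
    - exact: (wo_lt_le wo A0 c0m).
    - have [z [_ zw gz]] := sub y h.
      have [pw _] := epsilon_spec (inhabits c0) (fun z => ltM z w /\ g z = y) (ex_intro _ z (conj zw gz)).
      exact: (wo_lt_le wo pw wm).
    - exact: (wo_lt_le wo A1 c0m).
  move=> x y _ _; case: asboolP => hx; case: asboolP => hy.
  - by case=> ->.
  - by case=> _ e; exfalso; apply: n01.
  - by case=> _ e; exfalso; apply: n01.
  - move=> EE; have e : pick x = pick y by case: EE.
    have [z [_ zw gz]] := sub x hx.
    have [_ px] := epsilon_spec (inhabits c0) (fun z => ltM z w /\ g z = x) (ex_intro _ z (conj zw gz)).
    have [z' [_ zw' gz']] := sub y hy.
    have [_ py] := epsilon_spec (inhabits c0) (fun z => ltM z w /\ g z = y) (ex_intro _ z' (conj zw' gz')).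
    by rewrite -px -py; exact: (congr1 g e).
have [G [GS Gm _]] := enum_ex c0 wo wo hyp.
exists G; split.
- by move=> y; apply: GS.
- by move=> x y h; apply: Gm.
- move=> y0 h0.
  have [m [hm mmin]] := wo_min wo (ltac:(by exists y0) : [set y | ltM (G y) y] !=set0).
  by apply: (mmin (G m)) => //; apply: Gm.
Qed.

Lemma case_big M R (lt : M -> M -> Prop) (C : set M) (c0 z0 z1 : M) (j G : M -> M)
    (q : M -> M * M -> M) (r0 r1 : R) :
  well_order lt -> r0 <> r1 ->
  (forall a, exists c, C c /\ lt a c) ->
  (forall c, C c -> lt (j c) c0) -> (forall c c', C c -> C c' -> j c = j c' -> c = c') ->
  (forall y, ~ lt (G y) c0) -> (forall x y, lt x y -> lt (G x) (G y)) ->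
  lt z0 c0 -> lt z1 c0 -> z0 <> z1 ->
  (forall m, ~ lt m c0 -> (forall p, sq lt m p -> lt (q m p) m) /\
      (forall p p', sq lt m p -> sq lt m p' -> q m p = q m p' -> p = p')) ->
  exists P, open_partition (@bd_open M R lt) P /\ P #= [set: lt_pow lt R].
Proof.
move=> wo r01 cof jC jinj Gc0 Gm z0c z1c z01 qP.
have Ginj : forall x y, G x = G y -> x = y.
  move=> x y e; case: (wo_tri wo x y) => [h|//|h].
  - by have := Gm x y h; rewrite e => /(wo_irr wo).
  - by have := Gm y x h; rewrite e => /(wo_irr wo).
pose mc c := wmax lt c c0.
have mc0 : forall c, ~ lt (mc c) c0 by move=> c; exact: wmax_r.
have mcc : forall c x, lt x c -> lt x (mc c).
  by move=> c x h; apply: (wo_lt_le wo h); exact: wmax_l.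
have mcc0 : forall c x, lt x c0 -> lt x (mc c).
  by move=> c x h; apply: (wo_lt_le wo h); exact: mc0.
pose u c x := if `[< x = j c >] then r1 else r0.
have u_inj : forall c c', C c -> C c' -> (forall x, lt x c0 -> u c x = u c' x) -> c = c'.
  move=> c c' Cc Cc' h; have := h (j c) (jC c Cc); rewrite /u.
  case: asboolP => [_|n]; last by case: n.
  by case: asboolP => [e _|_ e]; [exact: jinj|exfalso; apply: r01].
pose codeP (f : M -> R) c := C c /\ forall x, lt x c0 -> f x = u c x.
pose cf f := epsilon (inhabits c0) (codeP f).
pose beta f := if `[< exists c, codeP f c >] then G (mc (cf f)) else c0.
have beta_ge : forall f, ~ lt (beta f) c0.
  by move=> f; rewrite /beta; case: asboolP => _; [exact: Gc0|exact: (wo_irr wo)].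
have beta_code : forall f c, codeP f c -> beta f = G (mc c).
  move=> f c cP; rewrite /beta; case: asboolP => [ex|n]; last by exfalso; apply: n; exists c.
  have [C1 h1] := epsilon_spec (inhabits c0) (codeP f) ex.
  have [C2 h2] := cP.
  congr (G (mc _)); apply: u_inj => // x xc0.
  by rewrite -h1 // h2.
have st : stopping lt beta.
  move=> f g hg; rewrite /beta /cf.
  have -> : codeP g = codeP f.
    apply: boolp.funext => c; apply: boolp.propext; rewrite /codeP.
    have ag : forall x, lt x c0 -> g x = f x.
      by move=> x xc0; apply: hg; exact: (wo_lt_le wo xc0 (beta_ge f)).
    split => -[Cc h]; split => // x xc0.
      by rewrite -ag // h.
    by rewrite ag // h.
  by [].
pose ca a := epsilon (inhabits c0) (fun c => C c /\ lt a c).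
have caP : forall a, C (ca a) /\ lt a (ca a).
  by move=> a; apply: (epsilon_spec (inhabits c0) (fun c => C c /\ lt a c)); apply: cof.
pose pd c z := G (q (mc c) (z, z0)).
pose pm c z := G (q (mc c) (z, z1)).
have sqm : forall c x y, lt x (mc c) -> lt y (mc c) -> sq lt (mc c) (x, y) by move=> c x y hx hy; split.
have qlt : forall c x y, lt x (mc c) -> lt y (mc c) -> lt (q (mc c) (x, y)) (mc c).
  by move=> c x y hx hy; apply: (qP _ (mc0 c)).1; split.
have qinj : forall c x y x' y', lt x (mc c) -> lt y (mc c) -> lt x' (mc c) -> lt y' (mc c) ->
    q (mc c) (x, y) = q (mc c) (x', y') -> x = x' /\ y = y'.
  move=> c x y x' y' h1 h2 h3 h4 e.
  by have [-> ->] := (qP _ (mc0 c)).2 (x, y) (x', y') (sqm _ _ _ h1 h2) (sqm _ _ _ h3 h4) e.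
have pdm : forall c z z', lt z (mc c) -> lt z' (mc c) -> pd c z <> pm c z'.
  move=> c z z' h h' /Ginj e; apply: z01.
  by have [_ ->] := qinj c _ _ _ _ h (mcc0 c _ z0c) h' (mcc0 c _ z1c) e.
have pdinj : forall c z z', lt z (mc c) -> lt z' (mc c) -> pd c z = pd c z' -> z = z'.
  move=> c z z' h h' /Ginj e.
  by have [-> _] := qinj c _ _ _ _ h (mcc0 c _ z0c) h' (mcc0 c _ z0c) e.
have pminj : forall c z z', lt z (mc c) -> lt z' (mc c) -> pm c z = pm c z' -> z = z'.
  move=> c z z' h h' /Ginj e.
  by have [-> _] := qinj c _ _ _ _ h (mcc0 c _ z1c) h' (mcc0 c _ z1c) e.
have pdc0 : forall c z, ~ lt (pd c z) c0 by move=> c z; exact: Gc0.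
have pmc0 : forall c z, ~ lt (pm c z) c0 by move=> c z; exact: Gc0.
have pdlt : forall c z, lt z (mc c) -> lt (pd c z) (G (mc c)).
  by move=> c z h; apply: Gm; apply: qlt => //; exact: mcc0.
have pmlt : forall c z, lt z (mc c) -> lt (pm c z) (G (mc c)).
  by move=> c z h; apply: Gm; apply: qlt => //; exact: mcc0.
pose zz c a y := epsilon (inhabits c0) (fun z => lt z a /\ pd c z = y).
pose Phi (p : lt_pow lt R) (y : M) : R :=
  if `[< lt y c0 >] then u (ca (projT1 p)) y else
  if `[< exists z, lt z (projT1 p) /\ pd (ca (projT1 p)) z = y >] then
    match pselect (lt (zz (ca (projT1 p)) (projT1 p) y) (projT1 p)) with
    | left h => projT2 p (exist _ (zz (ca (projT1 p)) (projT1 p) y) h)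
    | right _ => r0 end
  else if `[< pm (ca (projT1 p)) (projT1 p) = y >] then r1 else r0.
exists [set U | exists f, U = piece lt beta f]; split; first exact: stop_partition.
apply: (@stop_eq M R lt beta Phi st) => p p'; case: p => a s; case: p' => a' s' /= hyp.
have [Ca ac] := caP a; set c := ca a in Ca ac hyp.
have cP : codeP (Phi (existT _ a s)) c.
  by split => // x xc0; rewrite /Phi /=; case: asboolP.
rewrite (beta_code _ _ cP) in hyp.
have below : forall x, lt x c0 -> lt x (G (mc c)).
  by move=> x xc0; exact: (wo_lt_le wo xc0 (Gc0 _)).
have ec : ca a' = c.
  have [Ca' _] := caP a'; apply: u_inj => // x xc0.
  have := hyp x (below x xc0); rewrite /Phi /=; case: asboolP => // _.
have [_ a'c] := caP a'; rewrite ec in a'c.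
have ea : a' = a.
  have := hyp (pm c a) (pmlt c a (mcc c a ac)); rewrite /Phi /= ec -/c.
  case: asboolP => [h|_]; first by exfalso; exact: (pmc0 c a h).
  case: asboolP => [[z [za e]]|_].
    by exfalso; apply: (pdm c z a _ (mcc c a ac) e); apply: mcc; exact: (wo_trans wo za a'c).
  case: asboolP => [e _|n]; first exact: (pminj c _ _ (mcc c _ a'c) (mcc c _ ac) e).
  case: asboolP => [[z [za e]]|_].
    by exfalso; apply: (pdm c z a _ (mcc c a ac) e); apply: mcc; exact: (wo_trans wo za ac).
  case: asboolP => [_|n']; last by case: n'.
  by move=> e2; exfalso; apply: r01.
subst a'; congr existT; apply: boolp.funext => -[z hz].
have zc : lt z (mc c) by apply: mcc; exact: (wo_trans wo hz ac).
have := hyp (pd c z) (pdlt c z zc); rewrite /Phi /= -/c.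
case: asboolP => [h|_]; first by exfalso; exact: (pdc0 c z h).
case: asboolP => [_|n]; last by exfalso; apply: n; exists z.
have [h1 h2] : lt (zz c a (pd c z)) a /\ pd c (zz c a (pd c z)) = pd c z.
  by apply: (epsilon_spec (inhabits c0) (fun z' => lt z' a /\ pd c z' = pd c z)); exists z.
have E : zz c a (pd c z) = z.
  by apply: (pdinj c _ _ _ zc h2); apply: mcc; exact: (wo_trans wo h1 ac).
destruct (pselect (lt (zz c a (pd c z)) a)) as [h|n]; last by exfalso.
move: h; rewrite E => h.
by rewrite (proof_irrelevance _ h hz).
Qed.

Lemma TK_le M K (lt : M -> M -> Prop) (c0 : M) (iota : K -> M) (G : M -> M) (q : M -> M * M -> M) :
  well_order lt -> (forall k, lt (iota k) c0) -> (forall x y, iota x = iota y -> x = y) ->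
  (forall y, ~ lt (G y) c0) -> (forall x y, lt x y -> lt (G x) (G y)) -> (forall y, ~ lt (G y) y) ->
  (forall m, ~ lt m c0 -> (forall p, sq lt m p -> lt (q m p) m) /\
      (forall p p', sq lt m p -> sq lt m p' -> q m p = q m p' -> p = p')) ->
  [set: lt_pow lt K] #<= [set: lt_pow lt bool].
Proof.
move=> wo ic0 iinj Gc0 Gm Gge qP.
have Ginj : forall x y, G x = G y -> x = y.
  move=> x y e; case: (wo_tri wo x y) => [h|//|h].
  - by have := Gm x y h; rewrite e => /(wo_irr wo).
  - by have := Gm y x h; rewrite e => /(wo_irr wo).
pose mc a := wmax lt a c0.
have mc0 : forall a, ~ lt (mc a) c0 by move=> a; exact: wmax_r.
have mca : forall a x, lt x a -> lt x (mc a).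
  by move=> a x h; apply: (wo_lt_le wo h); exact: wmax_l.
have mcc0 : forall a x, lt x c0 -> lt x (mc a).
  by move=> a x h; apply: (wo_lt_le wo h); exact: mc0.
have mcG : forall a x, lt x (mc a) -> lt x (G a).
  move=> a x h; apply: (wo_lt_le wo h); rewrite /mc /wmax; case: asboolP => _.
    exact: Gc0.
  exact: Gge.
pose Psi (p : lt_pow lt K) : lt_pow lt bool :=
  existT _ (G (projT1 p)) (fun y : {b | lt b (G (projT1 p))} =>
    `[< exists z (hz : lt z (projT1 p)),
        sval y = q (mc (projT1 p)) (z, iota (projT2 p (exist _ z hz))) >]).
apply: (le_fun (f := Psi)) => // p p' _ _; case: p => a s; case: p' => a' s'.
rewrite /Psi /= => e.
have ea : a = a' by apply: Ginj; exact: (projT1_eq e).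
subst a'; have {}e := inj_pair2 _ _ _ _ _ e.
congr existT; apply: boolp.funext => -[z hz].
set y := q (mc a) (z, iota (s (exist _ z hz))).
have hy : lt y (G a) by apply: mcG; apply: (qP _ (mc0 a)).1; split; [exact: (mca _ _ hz)|exact: (mcc0 _ _ (ic0 _))].
have := congr1 (fun t => t (exist _ y hy)) e; rewrite /=.
case: asboolP => [_|n]; last by exfalso; apply: n; exists z, hz.
case: asboolP => [[z' [hz' ey]]|//] _.
have sq1 : sq lt (mc a) (z, iota (s (exist _ z hz))) by split; [exact: (mca _ _ hz)|exact: (mcc0 _ _ (ic0 _))].
have sq2 : sq lt (mc a) (z', iota (s' (exist _ z' hz'))) by split; [exact: (mca _ _ hz')|exact: (mcc0 _ _ (ic0 _))].
case: ((qP _ (mc0 a)).2 _ _ sq1 sq2 ey) => ez ei.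
subst z'; rewrite (proof_irrelevance _ hz' hz) in ei.
exact: iinj.
Qed.

Lemma Tbool_le M K (lt : M -> M -> Prop) (k0 k1 : K) : k0 <> k1 ->
  [set: lt_pow lt bool] #<= [set: lt_pow lt K].
Proof.
move=> k01.
apply: (le_fun (f := fun p : lt_pow lt bool =>
   existT _ (projT1 p) (fun y => if projT2 p y then k1 else k0) : lt_pow lt K)) => //.
move=> [a t] [a' t'] _ _ /= e.
have ea := projT1_eq e; simpl in ea; subst a'.
have {}e := inj_pair2 _ _ _ _ _ e.
congr existT; apply: boolp.funext => y.
have := congr1 (fun f => f y) e; rewrite /=.
by case: (t y); case: (t' y) => // h; exfalso; apply: k01.
Qed.

Lemma succ_lt_inf T (lt : T -> T -> Prop) (z0 c0 : T) : well_order lt -> (forall a, exists b, lt a b) ->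
  (forall y, ~ lt y z0) -> infinite_set (seg lt c0) -> lt (wsucc lt z0) c0.
Proof.
move=> wo nm hz inf; apply: contrapT => n; apply: inf.
apply: (sub_finite_set _ (finite_set1 z0)) => x xc0.
have xs : lt x (wsucc lt z0) := wo_lt_le wo xc0 n.
case: (wo_tri wo x z0) => [h|//|h]; first by exfalso; exact: (hz x h).
by exfalso; exact: ((wsuccP wo nm z0).2 x h xs).
Qed.

Unset Implicit Arguments.
Theorem mainTheorem2 (K : Type) (ltK : K -> K -> Prop)
    (M : Type) (ltM : M -> M -> Prop) :
  infinite_cardinal ltK -> regular ltK ->
  infinite_cardinal ltM -> singular ltM -> cf_is ltM K ->
  [/\ weight_is (@bd_open K M ltK) [set: lt_pow ltK M],
      weight_is (@bd_open M bool ltM) [set: lt_pow ltM bool],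
      weight_is (@bd_open M K ltM) [set: lt_pow ltM bool],
      weight_is (@bd_open M M ltM) [set: lt_pow ltM M] &
      [/\ exists P, open_partition (@bd_open K M ltK) P /\ P #= [set: lt_pow ltK M],
          exists P, open_partition (@bd_open M bool ltM) P /\ P #= [set: lt_pow ltM bool],
          exists P, open_partition (@bd_open M K ltM) P /\ P #= [set: lt_pow ltM bool] &
          exists P, open_partition (@bd_open M M ltM) P /\ P #= [set: lt_pow ltM M]]].
Proof.
move=> [[woK initK] infK] regK [[woM initM] infM] [C' [cofC' ltC']] [[C [cofC CK]] cfmin].
have [k0 _] := infinite_setN0 infK.
have nmK : forall a, exists b, ltK a b.
  move=> a; apply: contrapT => n; apply: infK.
  apply: (card_le_finite _ (finite_set1 a)); apply: regK => x; exists a; split => //.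
  by move=> ax; apply: n; exists x.
have KC : [set: K] #<= C by move/card_esym: CK; rewrite card_eq_le => /andP[].
have [e [_ einj]] := fun_le (card_le_trans KC (card_leT C)) (ltac:(by exists k0)).
have {}einj : forall x y, e x = e y -> x = y by move=> x y; apply: einj.
pose m0 := e k0.
have nmM : forall a, exists b, ltM a b.
  move=> a; apply: contrapT => n; apply: infK.
  apply: (card_le_finite _ (finite_set1 a)); apply: cfmin => x; exists a; split => //.
  by move=> ax; apply: n; exists x.
have KltM : card_lt [set: K] [set: M].
  have KC' := cfmin C' cofC'; split; first exact: (card_le_trans KC' (card_leT C')).
  by move=> MK; apply: ltC'.2; exact: (card_le_trans MK KC').
have [c0 [iota [ic0 iinj]]] := code_space m0 woK woM KltM.
have infc0 : infinite_set (seg ltM c0).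
  move=> fin; apply: infK; apply: (card_le_finite _ fin).
  by apply: (le_fun (f := iota)) => [x _|x y _ _]; [exact: ic0|exact: iinj].
have small : forall m, ~ ([set: M] #<= seg ltM m) by move=> m; exact: (initM m).2.
have [G [Gc0 Gm Gge]] := shift_ex woM infc0 small.
pose qP (m : M) (f : M * M -> M) := (forall p, sq ltM m p -> ltM (f p) m) /\
      (forall p p', sq ltM m p -> sq ltM m p' -> f p = f p' -> p = p').
pose q m := epsilon (inhabits (fun _ : M * M => c0)) (qP m).
have qS : forall m, ~ ltM m c0 -> qP m (q m).
  move=> m mc0; apply: (epsilon_spec (inhabits (fun _ : M * M => c0)) (qP m)).
  have infm : infinite_set (seg ltM m).
    move=> fin; apply: infc0; apply: (sub_finite_set _ fin) => x xc0; exact: (wo_lt_le woM xc0 mc0).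
  have [a0 Ha0] := infinite_setN0 infm.
  have [f [fS finj]] := fun_le (hess woM infm) (ltac:(by exists (a0, a0))).
  by exists f.
have [c1 Cc1] : exists c, C c by have [b [Cb _]] := cofC m0; exists b.
have CKle : C #<= [set: K] by move: CK; rewrite card_eq_le => /andP[].
have [f [_ finj]] := fun_le CKle (ltac:(by exists c1)).
pose j c := iota (f c).
have jC : forall c, C c -> ltM (j c) c0 by move=> c _; exact: ic0.
have jinj : forall c c', C c -> C c' -> j c = j c' -> c = c'.
  by move=> c c' Cc Cc' /iinj; apply: finj.
have cof : forall a, exists c, C c /\ ltM a c.
  move=> a; have [b [Cb nb]] := cofC (wsucc ltM a); exists b; split => //.
  exact: (wo_lt_le woM (wsuccP woM nmM a).1 nb).
pose zM := wmin ltM m0 setT.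
have hzM : forall y, ~ ltM y zM.
  by move=> y; have [_ h] := @wminP M ltM m0 setT woM (ltac:(by exists m0)); apply: h.
have z1c : ltM (wsucc ltM zM) c0 by exact: succ_lt_inf.
have z01 : ltM zM (wsucc ltM zM) := (wsuccP woM nmM zM).1.
have z0c : ltM zM c0 := wo_trans woM z01 z1c.
have zne : zM <> wsucc ltM zM by move=> e'; have h := z01; rewrite -e' in h; exact: (wo_irr woM h).
pose zK := wmin ltK k0 setT.
have zKne : zK <> wsucc ltK zK.
  move=> e'; have h := (wsuccP woK nmK zK).1; rewrite -e' in h; exact: (wo_irr woK h).
have big := fun R (r0 r1 : R) (r01 : r0 <> r1) =>
  @case_big M R ltM C c0 zM (wsucc ltM zM) j G q r0 r1 woM r01 cof jC jinj Gc0 Gm z0c z1c zne qS.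
have [P1 [oP1 eP1]] := @case_small K M ltK e k0 m0 woK nmK einj.
have [P2 [oP2 eP2]] := big bool false true ltac:(by []).
have [P3 [oP3 eP3]] := big K zK (wsucc ltK zK) zKne.
have [P4 [oP4 eP4]] := big M zM (wsucc ltM zM) zne.
have TKb : [set: lt_pow ltM K] #<= [set: lt_pow ltM bool] := TK_le woM ic0 iinj Gc0 Gm Gge qS.
have TbK : [set: lt_pow ltM bool] #<= [set: lt_pow ltM K] := Tbool_le ltM zKne.
have eP3' : P3 #= [set: lt_pow ltM bool].
  apply: (card_eq_trans eP3); exact: Cantor_Bernstein.
split.
- exact: (weight_from oP1 eP1 (card_lexx _)).
- exact: (weight_from oP2 eP2 (card_lexx _)).
- exact: (weight_from oP3 eP3' TKb).
- exact: (weight_from oP4 eP4 (card_lexx _)).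
- split; [by exists P1|by exists P2|by exists P3|by exists P4].
Qed.
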